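(* Let $c \in \mathbb{Z}$ and $f_c(x) = x^2+c$. If $-c$ is not a square in $\mathbb{Z}$, then $f_c(f_c(x)) = x^4 + 2cx^2 + c^2 + c$ is irreducible over $\mathbb{Q}$. If $-c$ is a square in $\mathbb{Z}$ and $c \neq 0, -1$, then writing $c = -b^2$ with $b \in \mathbb{Z}$ we have $f_c(f_c(x)) = (x^2 - (b^2 - b))(x^2 - (b^2+b))$, where each of the two quadratic factors is irreducible over $\mathbb{Q}$. *)

(* Defs.v *)
From mathcomp Require Import all_boot all_order all_algebra.
Set Implicit Arguments. Unset Strict Implicit. Unset Printing Implicit Defensive.
Import GRing.Theory Num.Theory.
Local Open Scope ring_scope.

Definition fc (c : int) : {poly rat} := 'X^2 + (c%:~R)%:P.

(* Main.v *)
Require Import Defs.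
From mathcomp Require Import all_boot all_order all_algebra.
From mathcomp Require Import zify ring lra.
Import GRing.Theory Num.Theory.
Local Open Scope ring_scope.
Lemma csq0 (c m : int) : 0 <= m -> c * c + c = m * m -> c = 0 \/ c = -1.
Proof.
move=> m0 H.
have [c1|c1] : 1 <= c \/ c <= 0 by lia.
  have : c < m by nia.
  nia.
have [c2|c2] : c <= -2 \/ -1 <= c by lia.
  have : m < -c by nia.
  nia.
lia.
Qed.
Lemma csq (c m : int) : c ^+ 2 + c = m ^+ 2 -> c = 0 \/ c = -1.
Proof. rewrite -(real_normK (num_real m)) !expr2 => H. exact: (@csq0 c `|m| (normr_ge0 m) H). Qed.
Lemma sqQ (x : rat) (n : int) : x ^+ 2 = n%:~R -> exists m : int, n = m ^+ 2.
Proof.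
move=> H.
have E : (numq x ^+ 2 = n * denq x ^+ 2)%R.
  apply: (@intr_inj rat).
  rewrite !rmorphM /= numqE -H; ring.
have cop := coprime_num_den x.
have E2 : (`|numq x| ^ 2 = `|n| * `|denq x| ^ 2)%N.
  by rewrite -!abszX -abszM E.
have D : (`|denq x| ^ 2 %| `|numq x| ^ 2)%N by rewrite E2 dvdn_mull.
have C : coprime (`|denq x| ^ 2) (`|numq x| ^ 2) by rewrite coprimeXl // coprimeXr // coprime_sym.
have D1 : (`|denq x| ^ 2 = 1)%N by move: C; rewrite /coprime (gcdn_idPl D) => /eqP.
have d1 : denq x = 1.
  have := denq_gt0 x; move: D1; rewrite -abszX.
  lia.
exists (numq x). by rewrite E d1 expr1n mulr1.
Qed.
Lemma fcE (c : int) : fc c \Po fc c =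
  'X^4 + (2 * c%:~R)%:P * 'X^2 + ((c%:~R) ^+ 2 + c%:~R : rat)%:P.
Proof.
rewrite /fc comp_polyD comp_polyC !expr2 comp_polyM comp_polyX.
ring.
Qed.
Lemma fact2 (b : int) : ('X^2 - ((b ^+ 2 - b)%:~R)%:P) * ('X^2 - ((b ^+ 2 + b)%:~R)%:P) =
   'X^4 + (2 * (- b ^+2)%:~R)%:P * 'X^2 + (((- b ^+ 2)%:~R) ^+ 2 + (- b ^+ 2)%:~R : rat)%:P.
Proof. ring. Qed.
Lemma size_quartic (A B : rat) : size ('X^4 + A%:P * 'X^2 + B%:P : {poly rat}) = 5%N.
Proof.
rewrite -addrA size_polyDl ?size_polyXn //.
apply: (leq_ltn_trans (size_polyD _ _)).
rewrite gtn_max (leq_ltn_trans (size_polyC_leq1 _)) // andbT.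
apply: (leq_ltn_trans (size_polyMleq _ _)).
rewrite size_polyXn. by move: (size_polyC_leq1 A); case: (size A%:P) => [|[|]].
Qed.

Lemma quartic_irr (A B : rat) :
 (forall x : rat, x ^+ 4 + A * x ^+ 2 + B != 0) ->
 (forall b e : rat, b + e = A -> b * e = B -> False) ->
 (forall b : rat, b ^+ 2 = B -> False) ->
 irreducible_poly ('X^4 + A%:P * 'X^2 + B%:P).
Proof.
move=> H1 H2 H3.
set p := 'X^4 + _ + _.
have sp : size p = 5%N by exact: size_quartic.
have nor : forall x, ~~ root p x.
  by move=> x; rewrite /root /p !hornerE; have := H1 x; rewrite expr2 mulrA.
split; first by rewrite sp.
move=> q sq qp.
have p0 : p != 0 by rewrite -size_poly_eq0 sp.
have q0 : q != 0 by apply: contraNneq p0 => q0; move: qp; rewrite q0 dvd0p.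
have sqle : (size q <= 5)%N by rewrite -sp dvdp_leq.
case/dvdpP: (qp) => r pE.
have r0 : r != 0 by apply: contraNneq p0 => r0; rewrite pE r0 mul0r.
have sr : (size r + size q = 6)%N.
  by move: (size_mul r0 q0); rewrite -pE sp; case: (size r + size q)%N => // n /= <-.
have hq : (0 < size q)%N by rewrite size_poly_gt0.
have [sq2|sq2] := eqVneq (size q) 2%N.
  case: (poly2_root sq2) => x rx.
  by move: (nor x); rewrite (root_dvdp qp rx).
have [sq4|sq4] := eqVneq (size q) 4%N.
  have sr2 : size r = 2%N by lia.
  case: (poly2_root sr2) => x rx.
  by move: (nor x); rewrite pE rootM rx.
have [sq5|sq5] := eqVneq (size q) 5%N.
  by rewrite -dvdp_size_eqp // sp sq5.
have sq3 : size q = 3%N by move: sq; lia.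
have sr3 : size r = 3%N by lia.
have qn : forall i, (3 <= i)%N -> q`_i = 0 by move=> i hi; rewrite nth_default // sq3.
have rn : forall i, (3 <= i)%N -> r`_i = 0 by move=> i hi; rewrite nth_default // sr3.
have q2 : q`_2 != 0.
  by move: q0; rewrite -lead_coef_eq0 lead_coefE sq3.
have co : forall i, p`_i = (r * q)`_i by move=> i; rewrite pE.
have e0 := co 0%N; have e1 := co 1%N; have e2 := co 2%N; have e3 := co 3%N; have e4 := co 4%N.
move: e0 e1 e2 e3 e4.
rewrite /p !coefM !big_ord_recr !big_ord0 /= !coefD !coefCM !coefXn !coefC /= /subn /subn_rec /=.
rewrite (qn 3%N) // (qn 4%N) // (rn 3%N) // (rn 4%N) //.
rewrite !(mulr0, mul0r, addr0, add0r, mulr1) => e0 e1 e2 e3 e4.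
exfalso.
move: e0 e1 e2 e3 e4 q2.
move: (r`_0) (r`_1) (r`_2) (q`_0) (q`_1) (q`_2) => s0 s1 s2 t0 t1 t2 e0 e1 e2 e3 e4 nq2.
have r1E : s1 = - (s2 ^+ 2 * t1).
  apply/eqP; rewrite -subr_eq0 opprK.
  have -> : s1 + s2 ^+ 2 * t1 = (s1 * t2 + s2 * t1) * s2 + s1 * (1 - s2 * t2) by ring.
  by rewrite -e3 -e4 subrr !(mul0r, mulr0, addr0).
have [t10|t10] := eqVneq t1 0.
  apply: (H2 (s0 * t2) (s2 * t0)).
    by rewrite e2 r1E t10 !(mulr0, addr0, oppr0, mul0r); ring.
  by rewrite e0; transitivity (s0 * t0 * (s2 * t2)); [ring | rewrite -e4 mulr1].
have r0E : s0 - s2 ^+ 2 * t0 = 0.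
  apply: (mulfI t10); rewrite mulr0.
  have -> : t1 * (s0 - s2 ^+ 2 * t0) = s0 * t1 + s1 * t0 by rewrite r1E; ring.
  by rewrite -e1.
apply: (H3 (s0 * t2)).
apply/eqP; rewrite e0 -subr_eq0.
have -> : (s0 * t2) ^+ 2 - s0 * t0 = s0 * t2 * t2 * (s0 - s2 ^+ 2 * t0) + s0 * t0 * ((s2 * t2) ^+ 2 - 1) by ring.
by rewrite r0E -e4 expr1n subrr !(mulr0, addr0).
Qed.

Lemma quad_irr (n : int) : (~ exists m : int, n = m ^+ 2) ->
  irreducible_poly ('X^2 - (n%:~R)%:P : {poly rat}).
Proof.
move=> nsq.
set p := 'X^2 - _.
have sp : size p = 3%N by rewrite size_XnsubC.
have nor : forall x, ~~ root p x.
  move=> x; apply/negP => rx; apply: nsq; apply: (@sqQ (x)).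
  move: rx; rewrite /root /p !hornerE => /eqP h.
  by apply/eqP; rewrite -subr_eq0 h.
split; first by rewrite sp.
move=> q sq qp.
have p0 : p != 0 by rewrite -size_poly_eq0 sp.
have q0 : q != 0 by apply: contraNneq p0 => q0; move: qp; rewrite q0 dvd0p.
have sqle : (size q <= 3)%N by rewrite -sp dvdp_leq.
have [sq3|sq3] := eqVneq (size q) 3%N.
  by rewrite -dvdp_size_eqp // sp sq3.
have [x rx] : {x | root p x}.
  apply: (reducible_cubic_root (q := q)) => //; first by rewrite sp.
  rewrite sp; have : (0 < size q)%N by rewrite size_poly_gt0.
  by move: sq sq3 sqle; case: (size q) => [|[|[|[|]]]].
by move: (nor x); rewrite rx.
Qed.

Theorem proposition2p1 (c : int) :
  ((~ exists m : int, - c = m ^+ 2) ->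
     irreducible_poly (fc c \Po fc c)) /\
  ((exists m : int, - c = m ^+ 2) -> c != 0 -> c != -1 ->
     forall b : int, c = - b ^+ 2 ->
       fc c \Po fc c =
         ('X^2 - ((b ^+ 2 - b)%:~R)%:P) * ('X^2 - ((b ^+ 2 + b)%:~R)%:P)
       /\ irreducible_poly ('X^2 - ((b ^+ 2 - b)%:~R)%:P : {poly rat})
       /\ irreducible_poly ('X^2 - ((b ^+ 2 + b)%:~R)%:P : {poly rat})).
Proof.
split.
  move=> nsq; rewrite fcE.
  set k : rat := c%:~R.
  have kN : - k = (- c)%:~R by rewrite rmorphN.
  apply: quartic_irr.
  - move=> x; apply/negP => /eqP h; apply: nsq; apply: (@sqQ (x ^+ 2 + k)).
    rewrite -kN.
    have -> : (x ^+ 2 + k) ^+ 2 = (x ^+ 4 + 2 * k * x ^+ 2 + (k ^+ 2 + k)) - k by ring.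
    by rewrite h sub0r.
  - move=> b e hs he; apply: nsq; apply: (@sqQ (b - k)); rewrite -kN.
    have -> : (b - k) ^+ 2 = - k + ((k ^+ 2 + k) - b * e) + b * ((b + e) - 2 * k) by ring.
    by rewrite he hs !subrr mulr0 !addr0.
  - move=> b hb.
    have [m hm] : exists m : int, c ^+ 2 + c = m ^+ 2.
      apply: (@sqQ (b)); by rewrite hb rmorphD /= rmorphXn.
    apply: nsq; case: (@csq _ _ hm) => ->; first by exists 0.
    by exists 1.
move=> _ c0 c1 b cb.
split; first by rewrite fcE fact2 cb.
have b0 : b != 0 by apply: contraNneq c0 => b0; rewrite cb b0 expr0n oppr0.
have b1 : b != 1 by apply: contraNneq c1 => b1; rewrite cb b1 expr1n.
have b2 : b != -1 by apply: contraNneq c1 => bm1; rewrite cb bm1 sqrrN expr1n.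
split; apply: quad_irr => -[m hm].
  have : (- b) ^+ 2 + (- b) = m ^+ 2 by rewrite sqrrN -hm.
  case/csq => h.
    by move: b0; rewrite -oppr_eq0 h eqxx.
  by move: b1; rewrite -(inj_eq oppr_inj) h eqxx.
have : b ^+ 2 + b = m ^+ 2 by rewrite -hm.
case/csq => h.
  by move: b0; rewrite h eqxx.
by move: b2; rewrite h eqxx.
Qed.
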